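(* Let $P$ and $P^\star$ be quantifier-free formulas, with $P$ represented as a syntax tree, and let $\mathcal S$ be a set of pairwise disjoint subtrees of $P$ (repair sites). Let $[P_\bot,P_\top]=\mathrm{CreateBounds}(P,\mathcal S)$, and suppose $P_\bot\Rightarrow P^\star$ and $P^\star\Rightarrow P_\top$. Then there exists a function $\mathcal F$ assigning to each $s\in\mathcal S$ a quantifier-free formula $\mathcal F(s)$ such that the formula obtained from $P$ by replacing each $s\in\mathcal S$ with $\mathcal F(s)$ is logically equivalent to $P^\star$.
   Context: **Formulas.** Predicates are quantifier-free formulas over a common set of typed variables. The atomic predicates are interpreted in a fixed theory. $\varphi\Rightarrow\psi$ means that $\psi$ holds under every assignment of the variables satisfying $\varphi$. Logical equivalence means mutual implication. Replacement formulas $\mathcal F(s)$ may be any quantifier-free formulas built with $\wedge,\vee,\neg$ from atomic predicates over these variables. **Syntax trees.** A predicate is represented as a syntax tree: - leaves are atomic predicates; - each internal node is labeled $\wedge$ or $\vee$ (with at least two children), or $\neg$ (with exactly one child). Subtrees are disjoint if none is contained in another. For a node $x$, $\mathcal S[x]$ denotes the elements of $\mathcal S$ in the subtree rooted at $x$. **CreateBounds.** $\mathrm{CreateBounds}(x,\mathcal S)$ is defined recursively: 1. If $x\in\mathcal S$, it is $[\mathrm{false},\mathrm{true}]$. 2. Otherwise, if $x$ is atomic, it is $[x,x]$. 3. Otherwise, if $x$ is labeled $\Theta\in\{\wedge,\vee\}$ with children $c_i$, it is $[\Theta_i l_{c_i},\Theta_i u_{c_i}]$, where $[l_{c_i},u_{c_i}]=\mathrm{CreateBounds}(c_i,\mathcal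 S[c_i])$. 4. Otherwise, $x$ is $\neg c$, and it is $[\neg u_c,\neg l_c]$, where $[l_c,u_c]=\mathrm{CreateBounds}(c,\mathcal S[c])$. *)

(* Defs.v *)
From mathcomp Require Import all_boot.
Set Implicit Arguments. Unset Strict Implicit. Unset Printing Implicit Defensive.

Inductive form (A : Type) : Type :=
| FTrue | FFalse
| FAtom of A
| FAnd of seq (form A)
| FOr of seq (form A)
| FNot of form A.

Arguments FTrue {A}. Arguments FFalse {A}.

Section Forms.
Variables (A V : Type) (sem : A -> V -> bool).

(* Semantics under an assignment v : V of the (typed) variables;
   sem a v is the interpretation of the atom a in the fixed theory. *)
Fixpoint eval (v : V) (f : form A) : bool :=
  match f with
  | FTrue => true
  | FFalse => false
  | FAtom a => sem a v
  | FAnd l => (fix ev l := if l is g :: l' then eval v g && ev l' else true) l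
  | FOr l => (fix ev l := if l is g :: l' then eval v g || ev l' else false) l
  | FNot g => ~~ eval v g
  end.

Definition fimplies (phi psi : form A) : Prop :=
  forall v : V, eval v phi -> eval v psi.

Definition fequiv (phi psi : form A) : Prop :=
  fimplies phi psi /\ fimplies psi phi.
End Forms.

Section Trees.
Variable A : Type.

Fixpoint is_tree (f : form A) : bool :=
  match f with
  | FTrue | FFalse => false
  | FAtom _ => true
  | FAnd l | FOr l =>
      (1 < size l) &&
      (fix ev l := if l is g :: l' then is_tree g && ev l' else true) l
  | FNot g => is_tree g
  end.

(* Subtrees are identified by their positions (paths of child indices,
   0-based; the child of a not-node has index 0). *)
Fixpoint valid_pos (f : form A) (p : seq nat) {struct p} : bool :=
  match p with
  | [::] => true
  | i :: p' =>
      match f with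
      | FAnd l | FOr l =>
          (fix vl l i := match l with
                         | [::] => false
                         | c :: l' => if i is j.+1 then vl l' j else valid_pos c p'
                         end) l i
      | FNot c => (i == 0) && valid_pos c p'
      | _ => false
      end
  end.

Definition restrict (S : seq (seq nat)) (i : nat) : seq (seq nat) :=
  [seq behead p | p <- S & if p is j :: _ then j == i else false].

(* pairwise disjoint subtrees: no element is contained in another one *)
Definition disjoint_sites (S : seq (seq nat)) : Prop :=
  forall p q, p \in S -> q \in S -> p != q -> ~~ prefix p q.

Fixpoint create_bounds (x : form A) (S : seq (seq nat)) : form A * form A :=
  if [::] \in S then (FFalse, FTrue) else
  match x with
  | FAnd l =>
      let bs := (fix cb l i := match l with
                               | [::] => [::]
                               | c :: l' => create_bounds c (restrict S i) :: cb l' i.+1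
                               end) l 0 in
      (FAnd (map fst bs), FAnd (map snd bs))
  | FOr l =>
      let bs := (fix cb l i := match l with
                               | [::] => [::]
                               | c :: l' => create_bounds c (restrict S i) :: cb l' i.+1
                               end) l 0 in
      (FOr (map fst bs), FOr (map snd bs))
  | FNot c =>
      let b := create_bounds c (restrict S 0) in (FNot b.2, FNot b.1)
  | _ => (x, x)
  end.

Fixpoint replace_sites (x : form A) (S : seq (seq nat))
    (F : seq nat -> form A) : form A :=
  if [::] \in S then F [::] else
  match x with
  | FAnd l =>
      FAnd ((fix rl l i := match l with
                           | [::] => [::]
                           | c :: l' => replace_sites c (restrict S i) (fun p => F (i :: p))
                                        :: rl l' i.+1
                           end) l 0)
  | FOr l =>
      FOr ((fix rl l i := match l with
                          | [::] => [::]
                          | c :: l' => replace_sites c (restrict S i) (fun p => F (i :: p))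
                                       :: rl l' i.+1
                          end) l 0)
  | FNot c => FNot (replace_sites c (restrict S 0) (fun p => F (0 :: p)))
  | _ => x
  end.
End Trees.

(* Main.v *)
From Stdlib Require Import FunctionalExtensionality.
Require Import Defs.
From mathcomp Require Import all_boot.

Section Aux.
Variables (A V : Type) (sem : A -> V -> bool).
Implicit Types (c x : form A) (l : seq (form A)) (S : seq (seq nat)) (F G : seq nat -> form A).

Fixpoint Fall (P : form A -> Prop) (l : seq (form A)) : Prop :=
  match l with [::] => True | c :: l' => P c /\ Fall P l' end.

Definition form_ind' (P : form A -> Prop) (H1 : P FTrue) (H2 : P FFalse)
  (H3 : forall a, P (FAtom a)) (H4 : forall l, Fall P l -> P (FAnd l))
  (H5 : forall l, Fall P l -> P (FOr l)) (H6 : forall c, P c -> P (FNot c)) :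
  forall f, P f :=
  fix IH f := match f return P f with
  | FTrue => H1 | FFalse => H2 | FAtom a => H3 a
  | FAnd l => H4 l ((fix G l := match l return Fall P l with
                     | [::] => I | c :: l' => conj (IH c) (G l') end) l)
  | FOr l => H5 l ((fix G l := match l return Fall P l with
                     | [::] => I | c :: l' => conj (IH c) (G l') end) l)
  | FNot c => H6 c (IH c) end.

Definition cbl (S : seq (seq nat)) : seq (form A) -> nat -> seq (form A * form A) :=
  fix cb l i := match l with
  | [::] => [::]
  | c :: l' => create_bounds c (restrict S i) :: cb l' i.+1
  end.
Lemma cbl_cons S c l i : cbl S (c :: l) i = create_bounds c (restrict S i) :: cbl S l i.+1.
Proof. by []. Qed.

Definition rsl (S : seq (seq nat)) (F : seq nat -> form A) : seq (form A) -> nat -> seq (form A) :=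
  fix rl l i := match l with
  | [::] => [::]
  | c :: l' => replace_sites c (restrict S i) (fun p => F (i :: p)) :: rl l' i.+1
  end.
Lemma rsl_cons S F c l i : rsl S F (c :: l) i =
  replace_sites c (restrict S i) (fun p => F (i :: p)) :: rsl S F l i.+1.
Proof. by []. Qed.

Lemma cb_and S l : [::] \notin S -> create_bounds (FAnd l) S =
  (FAnd (map fst (cbl S l 0)), FAnd (map snd (cbl S l 0))).
Proof. by move=> H; rewrite /= ifN. Qed.
Lemma cb_or S l : [::] \notin S -> create_bounds (FOr l) S =
  (FOr (map fst (cbl S l 0)), FOr (map snd (cbl S l 0))).
Proof. by move=> H; rewrite /= ifN. Qed.
Lemma cb_not S c : [::] \notin S -> create_bounds (FNot c) S =
  (FNot (create_bounds c (restrict S 0)).2, FNot (create_bounds c (restrict S 0)).1).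
Proof. by move=> H; rewrite /= ifN. Qed.
Lemma rs_and S F l : [::] \notin S -> replace_sites (FAnd l) S F = FAnd (rsl S F l 0).
Proof. by move=> H; rewrite /= ifN. Qed.
Lemma rs_or S F l : [::] \notin S -> replace_sites (FOr l) S F = FOr (rsl S F l 0).
Proof. by move=> H; rewrite /= ifN. Qed.
Lemma rs_not S F c : [::] \notin S -> replace_sites (FNot c) S F =
  FNot (replace_sites c (restrict S 0) (fun p => F (0 :: p))).
Proof. by move=> H; rewrite /= ifN. Qed.

Lemma evAnd v c l : eval sem v (FAnd (c :: l)) = eval sem v c && eval sem v (FAnd l).
Proof. by []. Qed.
Lemma ev2 v a b c : eval sem v (FAnd [:: FOr [:: a; b]; c]) =
  (eval sem v a || eval sem v b) && eval sem v c.
Proof. by rewrite /= orbF andbT. Qed.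
Lemma evOr v c l : eval sem v (FOr (c :: l)) = eval sem v c || eval sem v (FOr l).
Proof. by []. Qed.

Lemma bounds_le x : forall S v,
  eval sem v (create_bounds x S).1 ==> eval sem v (create_bounds x S).2.
Proof.
elim/form_ind': x.
- by move=> S v; rewrite /=; case: ([::] \in S).
- by move=> S v; rewrite /=; case: ([::] \in S).
- by move=> a S v; rewrite /=; case: ([::] \in S) => //; apply/implyP.
- move=> l Hl S v; case: (boolP ([::] \in S)) => HS; first by rewrite /= HS.
  rewrite cb_and //.
  elim: l Hl 0 => [_ i|c l IH [Hc Hl] i] //.
  rewrite cbl_cons !map_cons !evAnd. move: (Hc (restrict S i) v) (IH Hl i.+1).
  by case: (eval _ _ _); case: (eval _ _ _); case: (eval _ _ _); case: (eval _ _ _).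
- move=> l Hl S v; case: (boolP ([::] \in S)) => HS; first by rewrite /= HS.
  rewrite cb_or //.
  elim: l Hl 0 => [_ i|c l IH [Hc Hl] i] //.
  rewrite cbl_cons !map_cons !evOr. move: (Hc (restrict S i) v) (IH Hl i.+1).
  by case: (eval _ _ _); case: (eval _ _ _); case: (eval _ _ _); case: (eval _ _ _).
- move=> c IH S v; case: (boolP ([::] \in S)) => HS; first by rewrite /= HS.
  rewrite cb_not //=. move: (IH (restrict S 0) v).
  by case: (eval _ _ _); case: (eval _ _ _).
Qed.

Lemma bounds_le_and S l i v :
  eval sem v (FAnd (map fst (cbl S l i))) ==> eval sem v (FAnd (map snd (cbl S l i))).
Proof.
elim: l i => [|c l IH] i //. rewrite cbl_cons !map_cons !evAnd.
move: (bounds_le c (restrict S i) v) (IH i.+1).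
by case: (eval _ _ _); case: (eval _ _ _); case: (eval _ _ _); case: (eval _ _ _).
Qed.
Lemma bounds_le_or S l i v :
  eval sem v (FOr (map fst (cbl S l i))) ==> eval sem v (FOr (map snd (cbl S l i))).
Proof.
elim: l i => [|c l IH] i //. rewrite cbl_cons !map_cons !evOr.
move: (bounds_le c (restrict S i) v) (IH i.+1).
by case: (eval _ _ _); case: (eval _ _ _); case: (eval _ _ _); case: (eval _ _ _).
Qed.

Lemma rsl_ext S F G l j : (forall k p, j <= k -> F (k :: p) = G (k :: p)) ->
  rsl S F l j = rsl S G l j.
Proof.
elim: l j => [|c l IH] j H //. rewrite !rsl_cons.
rewrite (IH j.+1); last by move=> k p Hk; apply: H; apply: ltnW.
have -> : (fun p => F (j :: p)) = (fun p => G (j :: p)).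
  by apply: functional_extensionality => p; apply: H.
by [].
Qed.

Definition Good x := forall S T,
  (forall v, eval sem v (create_bounds x S).1 ==> eval sem v T) ->
  (forall v, eval sem v T ==> eval sem v (create_bounds x S).2) ->
  exists F, forall v, eval sem v (replace_sites x S F) = eval sem v T.

Definition combine (i : nat) (Fc Fr : seq nat -> form A) (p : seq nat) :=
  if p is j :: p' then (if j == i then Fc p' else Fr p) else Fr p.

Lemma main x : Good x.
Proof.
elim/form_ind': x.
- move=> S T H1 H2; case: (boolP ([::] \in S)) => HS.
    by exists (fun _ => T) => v; rewrite /= HS.
  exists (fun _ => T) => v; move: (H1 v) (H2 v); rewrite /= (negbTE HS) /=.
  by case: (eval _ _ _).
- move=> S T H1 H2; case: (boolP ([::] \in S)) => HS.
    by exists (fun _ => T) => v; rewrite /= HS.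
  exists (fun _ => T) => v; move: (H1 v) (H2 v); rewrite /= (negbTE HS) /=.
  by case: (eval _ _ _).
- move=> a S T H1 H2; case: (boolP ([::] \in S)) => HS.
    by exists (fun _ => T) => v; rewrite /= HS.
  exists (fun _ => T) => v; move: (H1 v) (H2 v); rewrite /= (negbTE HS) /=.
  by case: (eval _ _ _); case: (sem a v).
- move=> l Hl S T H1 H2; case: (boolP ([::] \in S)) => HS.
    by exists (fun _ => T) => v; rewrite /= HS.
  rewrite cb_and // in H1 H2.
  suff [F HF] : exists F, forall v, eval sem v (FAnd (rsl S F l 0)) = eval sem v T.
    by exists F => v; rewrite rs_and.
  move: 0 T H1 H2.
  elim: l Hl => [_|c l IH [Hc Hl]] i T H1 H2.
    by exists (fun _ => T) => v; move: (H1 v) (H2 v) => /=; case: (eval _ _ _).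
  rewrite cbl_cons /= in H1 H2.
  set lc := (create_bounds c (restrict S i)).1.
  set uc := (create_bounds c (restrict S i)).2.
  set L := FAnd (map fst (cbl S l i.+1)).
  set U := FAnd (map snd (cbl S l i.+1)).
  have E1 v : eval sem v lc ==> eval sem v uc by apply: bounds_le.
  have E2 v : eval sem v L ==> eval sem v U by apply: bounds_le_and.
  have H1' v : eval sem v lc && eval sem v L ==> eval sem v T by exact: (H1 v).
  have H2' v : eval sem v T ==> eval sem v uc && eval sem v U by exact: (H2 v).
  have [Fc HFc] : exists F, forall v, eval sem v (replace_sites c (restrict S i) F) = eval sem v (FAnd [:: FOr [:: T; lc]; uc]).
    apply: Hc.
    move=> v /=; move: (E1 v) (H1' v) (H2' v) (E2 v).
    by rewrite -/lc -/uc; case: (eval _ _ lc); case: (eval _ _ uc); case: (eval _ _ T);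
      case: (eval _ _ L); case: (eval _ _ U).
    move=> v /=; move: (E1 v) (H1' v) (H2' v) (E2 v).
    by rewrite -/lc -/uc; case: (eval _ _ lc); case: (eval _ _ uc); case: (eval _ _ T);
      case: (eval _ _ L); case: (eval _ _ U).
  have [Fr HFr] : exists F, forall v, eval sem v (FAnd (rsl S F l i.+1)) = eval sem v (FAnd [:: FOr [:: T; L]; U]).
    apply: IH Hl i.+1 _ _ _.
    move=> w; cbn [fst snd]; rewrite -/L -/U ev2; move: (E1 w) (H1' w) (H2' w) (E2 w).
    by case: (eval _ _ lc); case: (eval _ _ uc); case: (eval _ _ T);
      case: (eval _ _ L); case: (eval _ _ U).
    move=> w; cbn [fst snd]; rewrite -/L -/U ev2; move: (E1 w) (H1' w) (H2' w) (E2 w).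
    by case: (eval _ _ lc); case: (eval _ _ uc); case: (eval _ _ T);
      case: (eval _ _ L); case: (eval _ _ U).
  exists (combine i Fc Fr) => v; rewrite rsl_cons.
  rewrite (@rsl_ext S (combine i Fc Fr) Fr); last first.
    by move=> k p Hk; rewrite /combine; case: eqP => // Hki; move: Hk; rewrite Hki ltnn.
  have -> : (fun p => combine i Fc Fr (i :: p)) = Fc.
    by apply: functional_extensionality => p; rewrite /combine eqxx.
  rewrite evAnd HFc HFr !ev2.
  move: (E1 v) (H1' v) (H2' v) (E2 v).
  by case: (eval _ _ lc); case: (eval _ _ uc); case: (eval _ _ T);
      case: (eval _ _ L); case: (eval _ _ U).
- move=> l Hl S T H1 H2; case: (boolP ([::] \in S)) => HS.
    by exists (fun _ => T) => v; rewrite /= HS.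
  rewrite cb_or // in H1 H2.
  suff [F HF] : exists F, forall v, eval sem v (FOr (rsl S F l 0)) = eval sem v T.
    by exists F => v; rewrite rs_or.
  move: 0 T H1 H2.
  elim: l Hl => [_|c l IH [Hc Hl]] i T H1 H2.
    by exists (fun _ => T) => v; move: (H1 v) (H2 v) => /=; case: (eval _ _ _).
  rewrite cbl_cons /= in H1 H2.
  set lc := (create_bounds c (restrict S i)).1.
  set uc := (create_bounds c (restrict S i)).2.
  set L := FOr (map fst (cbl S l i.+1)).
  set U := FOr (map snd (cbl S l i.+1)).
  have E1 v : eval sem v lc ==> eval sem v uc by apply: bounds_le.
  have E2 v : eval sem v L ==> eval sem v U by apply: bounds_le_or.
  have H1' v : eval sem v lc || eval sem v L ==> eval sem v T by exact: (H1 v).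
  have H2' v : eval sem v T ==> eval sem v uc || eval sem v U by exact: (H2 v).
  have [Fc HFc] : exists F, forall v, eval sem v (replace_sites c (restrict S i) F) = eval sem v (FAnd [:: FOr [:: T; lc]; uc]).
    apply: Hc.
    move=> v /=; move: (E1 v) (H1' v) (H2' v) (E2 v).
    by rewrite -/lc -/uc; case: (eval _ _ lc); case: (eval _ _ uc); case: (eval _ _ T);
      case: (eval _ _ L); case: (eval _ _ U).
    move=> v /=; move: (E1 v) (H1' v) (H2' v) (E2 v).
    by rewrite -/lc -/uc; case: (eval _ _ lc); case: (eval _ _ uc); case: (eval _ _ T);
      case: (eval _ _ L); case: (eval _ _ U).
  have [Fr HFr] : exists F, forall v, eval sem v (FOr (rsl S F l i.+1)) = eval sem v (FAnd [:: FOr [:: T; L]; U]).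
    apply: IH Hl i.+1 _ _ _.
    move=> w; cbn [fst snd]; rewrite -/L -/U ev2; move: (E1 w) (H1' w) (H2' w) (E2 w).
    by case: (eval _ _ lc); case: (eval _ _ uc); case: (eval _ _ T);
      case: (eval _ _ L); case: (eval _ _ U).
    move=> w; cbn [fst snd]; rewrite -/L -/U ev2; move: (E1 w) (H1' w) (H2' w) (E2 w).
    by case: (eval _ _ lc); case: (eval _ _ uc); case: (eval _ _ T);
      case: (eval _ _ L); case: (eval _ _ U).
  exists (combine i Fc Fr) => v; rewrite rsl_cons.
  rewrite (@rsl_ext S (combine i Fc Fr) Fr); last first.
    by move=> k p Hk; rewrite /combine; case: eqP => // Hki; move: Hk; rewrite Hki ltnn.
  have -> : (fun p => combine i Fc Fr (i :: p)) = Fc.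
    by apply: functional_extensionality => p; rewrite /combine eqxx.
  rewrite evOr HFc HFr !ev2.
  move: (E1 v) (H1' v) (H2' v) (E2 v).
  by case: (eval _ _ lc); case: (eval _ _ uc); case: (eval _ _ T);
      case: (eval _ _ L); case: (eval _ _ U).
- move=> c IH S T H1 H2; case: (boolP ([::] \in S)) => HS.
    by exists (fun _ => T) => v; rewrite /= HS.
  rewrite cb_not // in H1 H2.
  have [Fc HFc] : exists F, forall v, eval sem v (replace_sites c (restrict S 0) F) = eval sem v (FNot T).
    apply: IH.
    by move=> v; move: (H2 v) => /=; case: (eval _ _ _); case: (eval _ _ _).
    by move=> v; move: (H1 v) => /=; case: (eval _ _ _); case: (eval _ _ _).
  exists (fun p => Fc (behead p)) => v; rewrite rs_not //= HFc /=.
  by rewrite negbK.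
Qed.
End Aux.

Theorem mainTheorem3 (A V : Type) (sem : A -> V -> bool)
    (P Pstar : form A) (S : seq (seq nat)) :
  is_tree P ->
  (forall s, s \in S -> valid_pos P s) ->
  disjoint_sites S ->
  fimplies sem (create_bounds P S).1 Pstar ->
  fimplies sem Pstar (create_bounds P S).2 ->
  exists F : seq nat -> form A,
    fequiv sem (replace_sites P S F) Pstar.
Proof.
move=> _ _ _ H1 H2.
have [F HF] := @main A V sem P S Pstar (fun v => introT implyP (H1 v))
  (fun v => introT implyP (H2 v)).
by exists F; split => v; rewrite HF.
Qed.
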